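(* Let $(X,d_X)$ be an ultrametric space and let $Y$ be any separable metrizable space. Then a function $f: X \to Y$ is of Baire class $1$ if and only if $f$ is the pointwise limit of a sequence of full functions from $X$ to $Y$.
   Context: Work in ZF plus countable choice over the reals. A function $f:X\to Y$ between metrizable spaces is of Baire class $1$ if $f^{-1}(U)\in\mathbf{\Sigma}^0_2(X)$ for every open $U\subseteq Y$. In an ultrametric space $(X,d_X)$, a set $A\subseteq X$ is full with constant $r>0$ if for every $x\in A$ the open ball $B(x,r)=\{y\in X: d_X(x,y)<r\}$ is contained in $A$; $A$ is full if it is full with some constant $r>0$. A function $f:X\to Y$ is full if it takes only finitely many values and the preimage of each of these values is a full subset of $X$. *)

(* Defs.v *)
From Stdlib Require Import Reals List.
Open Scope R_scope.

Section MetricDefs.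
Context {T : Type} (d : T -> T -> R).

Definition is_metric : Prop :=
  (forall x y, d x y = 0 <-> x = y) /\
  (forall x y, d x y = d y x) /\
  (forall x y z, d x z <= d x y + d y z).

Definition is_ultrametric : Prop :=
  is_metric /\ (forall x y z, d x z <= Rmax (d x y) (d y z)).

Definition open_in (U : T -> Prop) : Prop :=
  forall x, U x -> exists r, 0 < r /\ forall y, d x y < r -> U y.

Definition closed_in (C : T -> Prop) : Prop :=
  open_in (fun x => ~ C x).

Definition Sigma02 (A : T -> Prop) : Prop :=
  exists C : nat -> T -> Prop,
    (forall n, closed_in (C n)) /\ (forall x, A x <-> exists n, C n x).

Definition separable : Prop :=
  exists S : T -> Prop,
    (exists g : nat -> option T, forall y, S y -> exists n, g n = Some y) /\
    (forall y e, 0 < e -> exists z, S z /\ d y z < e).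

Definition full_set (A : T -> Prop) : Prop :=
  exists r, 0 < r /\ forall x, A x -> forall y, d x y < r -> A y.

End MetricDefs.

Definition baire_class1 {X Y : Type} (dX : X -> X -> R) (dY : Y -> Y -> R)
  (f : X -> Y) : Prop :=
  forall U : Y -> Prop, open_in dY U -> Sigma02 dX (fun x => U (f x)).

Definition full_fun {X Y : Type} (dX : X -> X -> R) (g : X -> Y) : Prop :=
  (exists l : list Y, forall x, In (g x) l) /\
  (forall y : Y, full_set dX (fun x => g x = y)).

Definition pointwise_limit {X Y : Type} (dY : Y -> Y -> R)
  (fs : nat -> X -> Y) (f : X -> Y) : Prop :=
  forall x e, 0 < e -> exists N : nat, forall n, (N <= n)%nat -> dY (fs n x) (f x) < e.

(* Main.v *)
Require Import Defs.
From Stdlib Require Import Reals List.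
From Stdlib Require Import Lra Lia Classical ClassicalEpsilon.
From Stdlib Require Cantor.

Open Scope R_scope.

Lemma inv_pos (k : nat) : 0 < / INR (S k).
Proof. apply Rinv_0_lt_compat, lt_0_INR; lia. Qed.

Lemma inv_small (e : R) : 0 < e -> exists k : nat, / INR (S k) < e.
Proof.
  intros He. destruct (archimed_cor1 e He) as [N [HN HN0]].
  exists (pred N). replace (S (pred N)) with N by lia. exact HN.
Qed.

Lemma inv_mono (k k' : nat) : (k <= k')%nat -> / INR (S k') <= / INR (S k).
Proof.
  intros H. apply Rinv_le_contravar. apply lt_0_INR; lia. apply le_INR; lia.
Qed.

Lemma converse (X Y : Type) (dX : X -> X -> R) (dY : Y -> Y -> R)
  (hY : is_metric dY) (f : X -> Y) (fs : nat -> X -> Y) :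
  (forall n, full_fun dX (fs n)) -> pointwise_limit dY fs f ->
  baire_class1 dX dY f.
Proof.
  intros Hfull Hlim U HU.
  destruct hY as [H0 [Hsym Htri]].
  exists (fun n x => forall p, (snd (Cantor.of_nat n) <= p)%nat ->
            forall z, ~ U z -> / INR (S (fst (Cantor.of_nat n))) <= dY (fs p x) z).
  split.
  - intros n x Hx.
    apply not_all_ex_not in Hx as [p Hp].
    apply imply_to_and in Hp as [HpN Hp].
    apply not_all_ex_not in Hp as [z Hz].
    apply imply_to_and in Hz as [Hz Hlt]. apply Rnot_le_lt in Hlt.
    destruct (proj2 (Hfull p) (fs p x)) as [r [Hr Hball]].
    exists r; split; [exact Hr|].
    intros y Hy Hc.
    assert (E : fs p y = fs p x) by (apply (Hball x eq_refl y Hy)).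
    specialize (Hc p HpN z Hz). rewrite E in Hc. lra.
  - intros x; split.
    + intros Hfx. destruct (HU _ Hfx) as [r [Hr Hb]].
      destruct (inv_small (r/2)) as [k Hk]; [lra|].
      destruct (Hlim x (r/2)) as [N HN]; [lra|].
      exists (Cantor.to_nat (k, N)). rewrite Cantor.cancel_of_to; cbn [fst snd].
      intros p Hp z Hz.
      assert (Hfz : r <= dY (f x) z).
      { destruct (Rle_lt_dec r (dY (f x) z)) as [?|Hl]; [assumption|].
        exfalso; exact (Hz (Hb z Hl)). }
      specialize (HN p Hp). rewrite Hsym in HN.
      specialize (Htri (f x) (fs p x) z). lra.
    + intros [n Hn]. apply NNPP; intros HnU.
      destruct (Hlim x (/ INR (S (fst (Cantor.of_nat n))))) as [N' HN'].
      { apply inv_pos. }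
      set (p := Nat.max (snd (Cantor.of_nat n)) N').
      specialize (Hn p ltac:(unfold p; lia) (f x) HnU).
      specialize (HN' p ltac:(unfold p; lia)). lra.
Qed.

Fixpoint largest (P : nat -> Prop) (k : nat) : option nat :=
  match k with
  | O => if excluded_middle_informative (P O) then Some O else None
  | S k' => if excluded_middle_informative (P (S k')) then Some (S k') else largest P k'
  end.

Lemma largest_some P k t : largest P k = Some t ->
  (t <= k)%nat /\ P t /\ forall s, (t < s)%nat -> (s <= k)%nat -> ~ P s.
Proof.
  induction k as [|k IH]; simpl.
  - destruct (excluded_middle_informative (P O)); intros H; inversion H; subst.
    split; [lia|split; [assumption|intros; lia]].
  - destruct (excluded_middle_informative (P (S k))) as [Hp|Hp]; intros H.
    + inversion H; subst. split; [lia|split; [assumption|intros; lia]].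
    + destruct (IH H) as [A [B Cc]]. split; [lia|split; [assumption|]].
      intros s Hs Hsk. destruct (Nat.eq_dec s (S k)) as [->|Hne]; [assumption|].
      apply Cc; lia.
Qed.

Lemma largest_none P k : largest P k = None -> forall s, (s <= k)%nat -> ~ P s.
Proof.
  induction k as [|k IH]; simpl.
  - destruct (excluded_middle_informative (P O)); intros H; inversion H.
    intros s Hs. replace s with O by lia. assumption.
  - destruct (excluded_middle_informative (P (S k))) as [Hp|Hp]; intros H; [inversion H|].
    intros s Hs. destruct (Nat.eq_dec s (S k)) as [->|Hne]; [assumption|].
    apply IH; [assumption|lia].
Qed.

Lemma largest_ext P Q k : (forall s, (s <= k)%nat -> (P s <-> Q s)) ->
  largest P k = largest Q k.
Proof.
  induction k as [|k IH]; simpl; intros H.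
  - destruct (excluded_middle_informative (P O)) as [a|a];
    destruct (excluded_middle_informative (Q O)) as [b|b]; auto;
    exfalso; [apply b, H|apply a, H]; auto.
  - destruct (excluded_middle_informative (P (S k))) as [a|a];
    destruct (excluded_middle_informative (Q (S k))) as [b|b];
    [reflexivity| exfalso; apply b, H; auto | exfalso; apply a, H; auto |
     apply IH; intros; apply H; lia].
Qed.

Lemma least_ex (P : nat -> Prop) : (exists n, P n) ->
  exists n, P n /\ forall m, (m < n)%nat -> ~ P m.
Proof.
  intros [n Hn]. apply NNPP; intros Hno.
  assert (forall k, ~ P k).
  { intros k. induction k as [k IH] using (well_founded_induction Wf_nat.lt_wf).
    intros Hk. apply Hno. exists k. split; [assumption|]. intros m Hm. apply IH; assumption. }
  eapply H; eauto.
Qed.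

Lemma uniform_K (P : nat -> nat -> Prop) n :
  (forall s, (s < n)%nat -> exists K, forall k, (K <= k)%nat -> P s k) ->
  exists K, forall s, (s < n)%nat -> forall k, (K <= k)%nat -> P s k.
Proof.
  induction n as [|n IH]; intros H.
  - exists O; intros; lia.
  - destruct IH as [K1 HK1]. { intros s Hs; apply H; lia. }
    destruct (H n ltac:(lia)) as [K2 HK2].
    exists (Nat.max K1 K2). intros s Hs k Hk.
    destruct (Nat.eq_dec s n) as [->|Hne].
    + apply HK2; lia.
    + apply HK1; lia.
Qed.

Definition Ck {X : Type} (dX : X -> X -> R) (C : nat -> X -> Prop) (t k : nat) (x : X) : Prop :=
  exists z, C t z /\ dX x z < / INR (S k).

Lemma Ck_self {X} (dX : X -> X -> R) (hX : is_metric dX) C t k x : C t x -> Ck dX C t k x.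
Proof.
  intros H. exists x. split; [assumption|]. destruct hX as [H0 _].
  rewrite (proj2 (H0 x x) eq_refl). apply inv_pos.
Qed.

Lemma Ck_eventually {X} (dX : X -> X -> R) C t x : closed_in dX (C t) -> ~ C t x ->
  exists K, forall k, (K <= k)%nat -> ~ Ck dX C t k x.
Proof.
  intros Hc Hn. destruct (Hc x Hn) as [r [Hr Hb]].
  destruct (inv_small r Hr) as [K HK]. exists K. intros k Hk [z [Hz Hd]].
  apply (Hb z); [|assumption]. pose proof (inv_mono K k Hk). lra.
Qed.

Lemma Ck_ball {X} (dX : X -> X -> R) (hX : is_ultrametric dX) C t k x x' :
  dX x x' < / INR (S k) -> (Ck dX C t k x <-> Ck dX C t k x').
Proof.
  destruct hX as [[H0 [Hsym Htri]] Hu]. intros Hd.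
  split; intros [z [Hz Hdz]]; exists z; split; auto.
  - eapply Rle_lt_trans; [apply (Hu x' x z)|]. apply Rmax_lub_lt; auto. rewrite Hsym; auto.
  - eapply Rle_lt_trans; [apply (Hu x x' z)|]. apply Rmax_lub_lt; auto.
Qed.

Definition good {X Y : Type} (dX : X -> X -> R) (dY : Y -> Y -> R) (q : nat -> Y)
  (lev : nat -> nat) (C : nat -> X -> Prop) (k : nat) (x : X) (t : nat) : Prop :=
  Ck dX C t k x /\ forall s, (s < t)%nat -> Ck dX C s k x ->
    dY (q s) (q t) < / INR (S (lev s)) + / INR (S (lev t)) /\ (lev s <= lev t)%nat.

Definition approx {X Y : Type} (dX : X -> X -> R) (dY : Y -> Y -> R) (y0 : Y) (q : nat -> Y)
  (lev : nat -> nat) (C : nat -> X -> Prop) (k : nat) (x : X) : Y :=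
  match largest (good dX dY q lev C k x) k with Some t => q t | None => y0 end.

Lemma forward_core (X Y : Type) (dX : X -> X -> R) (dY : Y -> Y -> R)
  (hX : is_ultrametric dX) (hY : is_metric dY) (f : X -> Y) (y0 : Y)
  (q : nat -> Y) (lev : nat -> nat) (C : nat -> X -> Prop)
  (HC : forall t, closed_in dX (C t))
  (Htrue : forall t x, C t x -> dY (q t) (f x) < / INR (S (lev t)))
  (Hwit : forall x J, exists t, (J <= lev t)%nat /\ C t x) :
  exists fs, (forall n, full_fun dX (fs n)) /\ pointwise_limit dY fs f.
Proof.
  exists (approx dX dY y0 q lev C). split.
  - intros k. split.
    + exists (y0 :: map q (seq 0 (S k))). intros x. unfold approx.
      destruct (largest _ k) as [t|] eqn:E; [|left; reflexivity].
      right. apply in_map. apply in_seq. destruct (largest_some _ _ _ E). lia.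
    + intros y. exists (/ INR (S k)). split; [apply inv_pos|].
      intros x Hx x' Hd. rewrite <- Hx. unfold approx.
      rewrite (largest_ext (good dX dY q lev C k x') (good dX dY q lev C k x)); [reflexivity|].
      intros s _. unfold good.
      pose proof (fun t => Ck_ball dX hX C t k x x' Hd) as B.
      split; intros [A1 A2]; split.
      * apply B; assumption.
      * intros s' Hs' Hc. apply A2; [assumption|]. apply B; assumption.
      * apply B; assumption.
      * intros s' Hs' Hc. apply A2; [assumption|]. apply B; assumption.
  - destruct hY as [H0 [Hsym Htri]].
    intros x e He.
    destruct (inv_small (e/3)) as [J0 HJ0]; [lra|].
    destruct (least_ex (fun t => (J0 <= lev t)%nat /\ C t x) (Hwit x J0)) as [t0 [[Hl0 Ht0] Hmin]].
    destruct (uniform_K (fun s k => C s x \/ ~ Ck dX C s k x) t0) as [K1 HK1].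
    { intros s Hs. destruct (classic (C s x)) as [Hc|Hc].
      - exists O; intros; left; assumption.
      - destruct (Ck_eventually dX C s x (HC s) Hc) as [K HK]. exists K; intros; right; auto. }
    exists (Nat.max K1 t0). intros k Hk.
    assert (Hr0 : / INR (S (lev t0)) <= / INR (S J0)) by (apply inv_mono; lia).
    assert (Hg : good dX dY q lev C k x t0).
    { split; [apply Ck_self; [exact (proj1 hX)|assumption]|].
      intros s Hs Hcs.
      assert (Cs : C s x).
      { destruct (HK1 s Hs k ltac:(lia)) as [?|Hn]; [assumption|contradiction]. }
      split.
      - pose proof (Htrue s x Cs). pose proof (Htrue t0 x Ht0).
        pose proof (Htri (q s) (f x) (q t0)) as T1. rewrite (Hsym (f x) (q t0)) in T1. lra.
      - destruct (Compare_dec.le_lt_dec J0 (lev s)) as [Hle|Hlt].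
        + exfalso. apply (Hmin s Hs). split; assumption.
        + lia. }
    unfold approx.
    destruct (largest _ k) as [t|] eqn:E.
    + destruct (largest_some _ _ _ E) as [Htk [Hgt Hmax]].
      destruct (Nat.lt_trichotomy t t0) as [Hlt|[->|Hgt0]].
      * exfalso. apply (Hmax t0 Hlt ltac:(lia) Hg).
      * pose proof (Htrue t0 x Ht0). lra.
      * destruct Hgt as [_ Hgt].
        destruct (Hgt t0 Hgt0 (proj1 Hg)) as [Hd Hlev].
        assert (/ INR (S (lev t)) <= / INR (S (lev t0))) by (apply inv_mono; lia).
        pose proof (Htrue t0 x Ht0) as T0.
        pose proof (Htri (q t) (q t0) (f x)) as T1. rewrite (Hsym (q t) (q t0)) in T1. lra.
    + exfalso. apply (largest_none _ _ E t0 ltac:(lia) Hg).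
Qed.

Theorem mainTheorem1 (X Y : Type) (dX : X -> X -> R) (dY : Y -> Y -> R)
  (hX : is_ultrametric dX) (hY : is_metric dY) (hsep : separable dY)
  (f : X -> Y) :
  baire_class1 dX dY f <->
  exists fs : nat -> X -> Y,
    (forall n, full_fun dX (fs n)) /\ pointwise_limit dY fs f.
Proof.
  split.
  2:{ intros [fs [H1 H2]]. exact (converse X Y dX dY hY f fs H1 H2). }
  intros hB.
  destruct (classic (inhabited X)) as [[x0]|Hne].
  2:{ exists (fun _ => f). split.
      - intros n. split.
        + exists nil. intros x. exfalso; apply Hne; constructor; exact x.
        + intros y. exists 1. split; [lra|]. intros x. exfalso; apply Hne; constructor; exact x.
      - intros x. exfalso; apply Hne; constructor; exact x. }
  set (y0 := f x0).
  destruct hsep as [SS [[g Hg] Hd]].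
  set (qq := fun m => match g m with Some y => y | None => y0 end).
  assert (Hdense : forall y e, 0 < e -> exists m, dY y (qq m) < e).
  { intros y e He. destruct (Hd y e He) as [z [Hz Hyz]]. destruct (Hg z Hz) as [m Hm].
    exists m. unfold qq. rewrite Hm. exact Hyz. }
  destruct hY as [H0 [Hsym Htri]].
  set (U := fun m j => fun y => dY (qq m) y < / INR (S j)).
  assert (HU : forall m j, open_in dY (U m j)).
  { intros m j y Hy. unfold U in *. exists (/ INR (S j) - dY (qq m) y). split; [lra|].
    intros z Hz. pose proof (Htri (qq m) y z). lra. }
  set (Cfam := fun m j => proj1_sig (constructive_indefinite_description _ (hB (U m j) (HU m j)))).
  assert (Hspec : forall m j, (forall n, closed_in dX (Cfam m j n)) /\
                  (forall x, U m j (f x) <-> exists n, Cfam m j n x)).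
  { intros m j. unfold Cfam. destruct (constructive_indefinite_description _ _) as [c Hc]. exact Hc. }
  set (mt := fun t => fst (Cantor.of_nat t)).
  set (jt := fun t => fst (Cantor.of_nat (snd (Cantor.of_nat t)))).
  set (it := fun t => snd (Cantor.of_nat (snd (Cantor.of_nat t)))).
  apply (forward_core X Y dX dY hX (conj H0 (conj Hsym Htri)) f y0
           (fun t => qq (mt t)) jt (fun t => Cfam (mt t) (jt t) (it t))).
  - intros t. apply (proj1 (Hspec _ _)).
  - intros t x Hc. assert (Hu : U (mt t) (jt t) (f x)).
    { apply (proj2 (Hspec _ _)). exists (it t). exact Hc. }
    exact Hu.
  - intros x J. destruct (Hdense (f x) (/ INR (S J)) (inv_pos J)) as [m Hm].
    assert (Hu : U m J (f x)) by (unfold U; rewrite Hsym; exact Hm).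
    destruct (proj1 (proj2 (Hspec m J) x) Hu) as [i Hi].
    exists (Cantor.to_nat (m, Cantor.to_nat (J, i))).
    unfold mt, jt, it. rewrite !Cantor.cancel_of_to. cbn [fst snd].
    rewrite !Cantor.cancel_of_to. cbn [fst snd]. split; [lia|exact Hi].
Qed.
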